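(* Let $p$ be a prime and $d>1$. Let $h^{\mathrm u}_{p,d}$ (resp. $h^{\mathrm l}_{p,d}$) be the number of unitary equivalence classes of frames $\Phi_J$ with $J\subset\mathbb{Z}_p$ a $d$-element subset with $0\notin J$ (resp. $0\in J$). Then $$h^{\mathrm u}_{p,d}=\frac{1}{p-1}\sum_{j\mid\gcd(p-1,d)}\binom{(p-1)/j}{d/j}\varphi(j),\qquad h^{\mathrm l}_{p,d}=\frac{1}{p-1}\sum_{j\mid\gcd(p-1,d-1)}\binom{(p-1)/j}{(d-1)/j}\varphi(j),$$ where $\varphi$ is Euler's totient function. (The formula for $h^{\mathrm u}_{p,d}$ also holds for $d=1$.)
   Context: Let $\omega=e^{2\pi i/p}$. For a $d$-element subset $J\subset\mathbb{Z}_p$, the cyclic harmonic frame $\Phi_J$ is the sequence $(v_k)_{k\in\mathbb{Z}_p}$ with $v_k=(\omega^{jk})_{j\in J}\in\mathbb{C}^J\cong\mathbb{C}^d$. Two finite sequences $(v_k)_{k\in I}$, $(w_k)_{k\in I'}$ in $\mathbb{C}^d$ are unitarily equivalent if there is a unitary $U$ and a bijection $\sigma:I\to I'$ with $v_k=Uw_{\sigma(k)}$ for all $k$. Frames $\Phi_J$ with $0\in J$ are called lifted, those with $0\notin J$ unlifted. *)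

(* Defs.v *)
From HB Require Import structures.
From mathcomp Require Import all_boot all_order all_algebra all_fingroup all_field.
From mathcomp Require Import spectral.
From Stdlib Require Import ClassicalEpsilon.
Set Implicit Arguments. Unset Strict Implicit. Unset Printing Implicit Defensive.
Import Order.TTheory GRing.Theory Num.Theory.
Local Open Scope ring_scope.

(* omega = e^{2 pi i / p} in the algebraic complex numbers algC:
   p.-root (-1) is the p-th root of -1 of minimal nonnegative argument,
   i.e. e^{i pi / p}; its square is e^{2 pi i / p}. *)
Definition omega (p : nat) : algC := (p.-root (-1)) ^+ 2.

(* The k-th vector of the cyclic harmonic frame Phi_J in C^J ~ C^d,
   where the coordinates are indexed by the elements of J listed in
   increasing order (enum J); d is intended to be #|J|. *)
Definition harm_vec (p d : nat) (J : {set 'I_p}) (k : 'I_p) : 'cV[algC]_d :=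
  \col_(i < d) omega p ^+ (nth 0%N (map val (enum J)) i * k).

Definition unit_equiv (p d : nat) (v w : 'I_p -> 'cV[algC]_d) : Prop :=
  exists (U : 'M[algC]_d) (sigma : {perm 'I_p}),
    U \is unitarymx /\ forall k, v k = U *m w (sigma k).

Definition asbool (P : Prop) : bool :=
  if excluded_middle_informative P then true else false.

Definition frame_equiv (p d : nat) (J K : {set 'I_p}) : bool :=
  asbool (unit_equiv (harm_vec d J) (harm_vec d K)).

Definition unlifted_sets (p d : nat) : {set {set 'I_p}} :=
  [set J : {set 'I_p} | (#|J| == d) && [forall i : 'I_p, (i \in J) ==> (val i != 0%N)]].
Definition lifted_sets (p d : nat) : {set {set 'I_p}} :=
  [set J : {set 'I_p} | (#|J| == d) && [exists i : 'I_p, (i \in J) && (val i == 0%N)]].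

Definition num_classes (p d : nat) (S : {set {set 'I_p}}) : nat :=
  #|[set [set K in S | frame_equiv d J K] | J in S]|.

Definition h_unlifted (p d : nat) : nat := num_classes d (unlifted_sets p d).
Definition h_lifted (p d : nat) : nat := num_classes d (lifted_sets p d).

Definition hformula (p e : nat) : rat :=
  ((p.-1)%:R)^-1 *
  (\sum_(j <- divisors (gcdn p.-1 e)) ('C(p.-1 %/ j, e %/ j) * totient j)%N%:R).

(* Main.v *)
Require Import Defs.
From HB Require Import structures.
From mathcomp Require Import all_boot all_order all_algebra all_fingroup all_field all_solvable.
From mathcomp Require Import spectral zify.
From Stdlib Require Import ClassicalEpsilon.
Set Implicit Arguments. Unset Strict Implicit. Unset Printing Implicit Defensive.
Import Order.TTheory GRing.Theory Num.Theory.
Local Open Scope ring_scope.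
Section Om.
Variable p : nat.
Hypothesis hp : prime p.

Lemma omega_p : omega p ^+ p = 1.
Proof.
have p0 := prime_gt0 hp.
by rewrite /omega -exprM mulnC exprM rootCK // sqrrN expr1n.
Qed.

Lemma omega_neq1 : omega p != 1.
Proof.
have p1 := prime_gt1 hp; have p0 := prime_gt0 hp.
have rl : ~~ (p.-root (-1 : algC) < 0) by rewrite rootC_lt0.
have rp : (p.-root (-1 : algC)) ^+ p = -1 by rewrite rootCK.
rewrite /omega; apply/eqP => /eqP; rewrite sqrf_eq1 => /orP[] /eqP r1.
  by move: rp; rewrite r1 expr1n => /eqP; rewrite -addr_eq0 -mulr2n pnatr_eq0.
by move: rl; rewrite r1 ltrN10.
Qed.

Lemma omega_prim : p.-primitive_root (omega p).
Proof.
have [m pm mp] := prim_order_exists (prime_gt0 hp) omega_p.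
have [m1|m1] := eqVneq m 1%N.
  by move: pm; rewrite m1 => /prim_expr_order; rewrite expr1 => h; have := omega_neq1; rewrite h eqxx.
by move: pm; rewrite (elimT (prime_nt_dvdP hp m1) mp).
Qed.

Lemma omega_expE n : omega p ^+ n = omega p ^+ (n %% p).
Proof. by rewrite {1}(divn_eq n p) exprD mulnC exprM omega_p expr1n mul1r. Qed.

Lemma omega_eq1 n : (omega p ^+ n == 1) = (p %| n)%N.
Proof. by rewrite -(prim_order_dvd omega_prim). Qed.

Lemma sum_omega t : \sum_(m < p) omega p ^+ (t * m) = if (p %| t)%N then p%:R else 0.
Proof.
case: ifP => h.
  rewrite (eq_bigr (fun _ => 1)); first by rewrite sumr_const card_ord.
  by move=> m _; apply/eqP; rewrite omega_eq1 dvdn_mulr.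
have: (omega p ^+ t - 1) * \sum_(m < p) omega p ^+ (t * m) = 0.
  rewrite (eq_bigr (fun m : 'I_p => (omega p ^+ t) ^+ m)); last by move=> m _; rewrite exprM.
  by rewrite -subrX1 -exprM mulnC exprM omega_p expr1n subrr.
by move/eqP; rewrite mulf_eq0 subr_eq0 omega_eq1 h => /eqP.
Qed.

Lemma norm_omega : `|omega p| = 1.
Proof.
apply/eqP; rewrite -(@pexpr_eq1 _ _ p) ?normr_ge0 ?prime_gt0 //.
by rewrite -normrX omega_p normr1.
Qed.

Lemma conj_omega n : (omega p ^+ n)^* = omega p ^+ (n * p.-1).
Proof.
rewrite rmorphXn /= mulnC exprM; congr (_ ^+ n).
have h : (omega p)^* * omega p = 1 by rewrite mulrC -normCK norm_omega expr1n.
have u : omega p != 0 by apply/eqP => h0; move: h; rewrite h0 mulr0 => /eqP; rewrite eq_sym oner_eq0.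
apply: (mulIf u); rewrite h -exprSr prednK ?prime_gt0 // omega_p //.
Qed.
End Om.

Lemma dvd_sub_eq (p a b : nat) : (a < p)%N -> (b < p)%N -> (p %| a + (p - b))%N = (a == b).
Proof.
move=> ha hb; apply/idP/eqP => [/dvdnP [k hk]|->]; last by rewrite subnKC ?dvdnn // ltnW.
case: k hk => [|[|k]] hk; lia.
Qed.

Section Fourier.
Variable n : nat.
Local Notation p := n.+2.
Hypothesis hp : prime p.
Local Notation w := (omega p).

Definition Ssum (J : {set 'I_p}) (f : 'I_p -> nat) (m : nat) : algC :=
  \sum_(x in J) w ^+ (f x * m).

Lemma sum_delta (A : {set 'I_p}) (g : 'I_p -> 'I_p) (z : 'I_p) :
  \sum_(y in A) \sum_(m < p) w ^+ ((g y + (p - z)) * m)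
  = (#|[set y in A | g y == z]| * p)%:R.
Proof.
rewrite (eq_bigr (fun y => if g y == z then p%:R else 0)); last first.
  by move=> y _; rewrite sum_omega // dvd_sub_eq.
rewrite -big_mkcondr /= natrM mulr_natl -sumr_const; apply: eq_bigl => y.
by rewrite !inE.
Qed.

Lemma expandS (J : {set 'I_p}) (f : 'I_p -> nat) (z : 'I_p) :
  \sum_(m < p) Ssum J f m * w ^+ ((p - z) * m) =
  \sum_(x in J) \sum_(m < p) w ^+ ((f x + (p - z)) * m).
Proof.
rewrite /Ssum; under eq_bigr do rewrite mulr_suml.
rewrite exchange_big /=; apply: eq_bigr => x _; apply: eq_bigr => m _.
by rewrite -exprD mulnDl.
Qed.

Lemma fourier (J K : {set 'I_p}) (g : 'I_p -> 'I_p) :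
  (forall m, Ssum J val m = Ssum K g m) -> J = g @: K.
Proof.
move=> H; apply/setP => z.
have E : \sum_(m < p) Ssum J val m * w ^+ ((p - z) * m) =
         \sum_(m < p) Ssum K g m * w ^+ ((p - z) * m).
  by apply: eq_bigr => m _; rewrite H.
move: E; rewrite !expandS.
rewrite (sum_delta J id) sum_delta => /eqP; rewrite eqr_nat eqn_pmul2r // => /eqP E.
have E1 : #|[set y in J | y == z]| = (z \in J).
  case: (boolP (z \in J)) => hz /=.
    by apply/eqP/cards1P; exists z; apply/setP => y; rewrite !inE; case: (y =P z) => [->|]; rewrite ?hz ?andbF.
  by apply/eqP; rewrite cards_eq0; apply/eqP/setP => y; rewrite !inE; case: (y =P z) => [->|]; rewrite ?(negPf hz) ?andbF.
rewrite E1 in E.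
case: (boolP (z \in J)) E => hz E.
  have : (0 < #|[set y in K | g y == z]|)%N by rewrite -E.
  by case/card_gt0P => y; rewrite !inE => /andP[yK /eqP <-]; rewrite imset_f.
apply/esym/negbTE/imsetP => [[y yK zE]].
suff : (0 < #|[set y in K | g y == z]|)%N by rewrite -E ltnn.
by apply/card_gt0P; exists y; rewrite !inE yK zE eqxx.
Qed.


Lemma omega_modE a b : a = b %[mod p] -> w ^+ a = w ^+ b.
Proof. by move=> h; rewrite omega_expE // h -omega_expE. Qed.

Lemma galois (J K : {set 'I_p}) c : #|J| = #|K| ->
  Ssum J val 1 = Ssum K val c -> forall m, Ssum J val m = Ssum K val (c * m).
Proof.
move=> hJK E m; case: (boolP (p %| m)%N) => hm.
  rewrite /Ssum (eq_bigr (fun _ => 1)); last by move=> x _; apply/eqP; rewrite omega_eq1 // dvdn_mull.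
  rewrite [RHS](eq_bigr (fun _ => 1)); last by move=> x _; apply/eqP; rewrite omega_eq1 // mulnA dvdn_mull.
  by rewrite !sumr_const hJK.
have cm : coprime m p by rewrite coprime_sym prime_coprime.
have [u hu] := Qn_aut_exists cm.
have := congr1 u E; rewrite /Ssum !rmorph_sum /=.
have wp x : (w ^+ x) ^+ p = 1 by rewrite -exprM mulnC exprM omega_p // expr1n.
rewrite (eq_bigr (fun x : 'I_p => w ^+ (x * m))); last by move=> x _; rewrite hu // muln1 -exprM.
by rewrite [X in _ = X -> _](eq_bigr (fun x : 'I_p => w ^+ (x * (c * m)))) // => x _; rewrite hu // -exprM mulnA.
Qed.

Lemma galois2 (J K : {set 'I_p}) c : #|J| = #|K| ->
  Ssum J val 1 = Ssum K val c -> J = (fun y => inZp c * y) @: K.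
Proof.
move=> hJK E; apply: fourier => m; rewrite (galois hJK E) /Ssum.
apply: eq_bigr => y _; apply: omega_modE => /=.
by rewrite [RHS]modnMml -[in RHS]mulnA [RHS]modnMml mulnCA.
Qed.

Lemma sum_enum (J : {set 'I_p}) d (F : nat -> algC) : #|J| = d ->
  \sum_(i < d) F (nth 0%N (map val (enum J)) i) = \sum_(x in J) F (val x).
Proof.
move=> <-.
transitivity (\sum_(i <- map val (enum J)) F i); last by rewrite big_map big_enum.
by rewrite (big_nth 0%N) size_map -cardE big_mkord.
Qed.


Lemma ndvd_aux (s0 s1 : nat) : (s0 < p)%N -> (s1 < p)%N -> s0 != s1 -> ~~ (p %| s0 * p.-1 + s1)%N.
Proof.
move=> h0 h1 h01; apply/negP => /dvdnP [k hk]; move/eqP: h01; apply.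
have e : (k * p + s0 = s0 * p + s1)%N by rewrite -hk /= mulnS; lia.
have : (k <= s0)%N by nia.
have : (s0 <= k)%N by nia.
nia.
Qed.

Local Open Scope sesquilinear_scope.

Lemma gram (J K : {set 'I_p}) d : #|J| = d -> #|K| = d ->
  unit_equiv (harm_vec d J) (harm_vec d K) ->
  exists c, ~~ (p %| c)%N /\ Ssum J val 1 = Ssum K val c.
Proof.
move=> hJ hK [U [s [HU Hv]]].
have HU' : U^t* *m U = 1%:M.
  by have := HU; rewrite -trmxC_unitary => /unitarymxP; rewrite trmxCK.
pose o1 : 'I_p := inord 1.
have dotE (L : {set 'I_p}) (a b : 'I_p) : #|L| = d ->
    ((harm_vec d L a)^t* *m harm_vec d L b) 0 0 = Ssum L val (a * p.-1 + b).
  move=> hL; rewrite mxE /Ssum -(sum_enum (fun x => w ^+ (x * (a * p.-1 + b))) hL); apply: eq_bigr => i _.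
  rewrite !mxE conj_omega // -exprD; congr (w ^+ _); nia.
have := congr1 (fun M => ((harm_vec d J ord0)^t* *m M) 0 0) (Hv o1).
rewrite /= dotE // {1}Hv trmx_mul map_mxM -mulmxA (mulmxA _ U) HU' mul1mx dotE //.
rewrite mul0n add0n /o1 inordK // => E.
exists (s ord0 * p.-1 + s o1)%N; split; last by rewrite -E.
apply: ndvd_aux => //; rewrite val_eqE (inj_eq perm_inj).
by rewrite -val_eqE /= inordK.
Qed.


Lemma sum_enumO (K : {set 'I_p}) d (F : 'I_p -> algC) : #|K| = d ->
  \sum_(i < d) F (nth ord0 (enum K) i) = \sum_(y in K) F y.
Proof.
move=> <-; rewrite -[RHS]big_enum (big_nth ord0) -cardE big_mkord //.
Qed.

Lemma sum_pick (K : {set 'I_p}) (f : 'I_p -> 'I_p) (finj : injective f) z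
   (G : 'I_p -> algC) y0 : y0 \in K -> f y0 = z ->
  \sum_(y in K) (z == f y)%:R * G y = G y0.
Proof.
move=> y0K fy0; rewrite (bigD1 y0) //= -fy0 eqxx mul1r big1 ?addr0 // => y /andP[_ ny].
by rewrite (inj_eq finj) eq_sym (negPf ny) mul0r.
Qed.

Lemma harm_vecE (J : {set 'I_p}) d (k : 'I_p) (i : 'I_d) j : #|J| = d ->
  harm_vec d J k i j = w ^+ (nth ord0 (enum J) i * k).
Proof.
by move=> hJ; rewrite mxE (nth_map ord0) // -cardE hJ.
Qed.

Lemma conv (J K : {set 'I_p}) d (a : 'I_p) : a \is a GRing.unit -> #|K| = d ->
  J = (fun y => a * y) @: K -> unit_equiv (harm_vec d J) (harm_vec d K).
Proof.
move=> ua hK hJK.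
have hJ : #|J| = d by rewrite hJK card_imset // => x y; apply: mulrI.
have finj : injective (fun y => a * y) by apply: mulrI.
pose eJ (i : 'I_d) := nth ord0 (enum J) i.
pose eK (i : 'I_d) := nth ord0 (enum K) i.
have eJin (i : 'I_d) : exists2 y, y \in K & a * y = eJ i.
  have : eJ i \in J by rewrite -mem_enum /eJ mem_nth // -cardE hJ.
  by rewrite [in X in X -> _]hJK => /imsetP[y yK ->]; exists y.
pose U : 'M[algC]_d := \matrix_(i, j) (eJ i == a * eK j)%:R.
exists U, (perm finj); split.
  apply/unitarymxP/matrixP => i j; rewrite !mxE.
  have [y yK ay] := eJin i.
  under eq_bigr do rewrite !mxE.
  rewrite (sum_enumO (fun z => (eJ i == a * z)%:R * ((eJ j == a * z)%:R)^*) hK).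
  rewrite (sum_pick finj (fun z => ((eJ j == a * z)%:R)^*) yK ay) ay conjC_nat.
  by rewrite /eJ nth_uniq ?enum_uniq // -?cardE ?hJ // eq_sym.
move=> k; apply/matrixP => i j; rewrite harm_vecE // !mxE.
have [y yK ay] := eJin i.
rewrite (eq_bigr (fun z => (eJ i == a * eK z)%:R * w ^+ (eK z * perm finj k))); last by move=> z _; rewrite mxE harm_vecE.
rewrite (sum_enumO (fun z => (eJ i == a * z)%:R * w ^+ (z * perm finj k)) hK).
rewrite (sum_pick finj _ yK ay) permE; move: ay; rewrite /eJ => <-; apply: omega_modE => /=.
by rewrite modnMmr modnMml mulnCA mulnA.
Qed.

End Fourier.

Section Cyc.
Local Open Scope group_scope.
Variables (gT : finGroupType) (G : {group gT}).
Hypothesis cG : cyclic G.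

Lemma card_order_eq j : (j %| #|G|)%N -> #|[set x in G | #[x] == j]| = totient j.
Proof.
case/cyclicP: (cG) => a defG jG.
have oa : #[a] = #|G| by rewrite defG.
have Gpos := cardG_gt0 G.
have jpos : (0 < j)%N := dvdn_gt0 Gpos jG.
have ja : (j %| #[a])%N by rewrite oa.
have da : (#[a] %/ j %| #[a])%N by rewrite -{2}(divnK ja) dvdn_mulr.
set y := a ^+ (#[a] %/ j).
have oy : #[y] = j.
  by rewrite orderXdiv // -{1}(divnK ja) mulKn // divn_gt0 // dvdn_leq // oa.
have aG : a \in G by rewrite defG cycle_id.
have yG : y \in G by rewrite groupX.
rewrite -oy totient_gen; apply: eq_card => x; rewrite !inE /generator.
apply/andP/idP => [[xG /eqP ox]|gx].
  by rewrite (eq_subG_cyclic cG) ?cycle_subG // -!/(order _) ox oy.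
have xy : <[x]> = <[y]> by apply/esym/eqP.
have xG : x \in G by rewrite -cycle_subG xy cycle_subG.
by rewrite xG /order xy.
Qed.

Lemma sum_order (F : nat -> nat) :
  (\sum_(x in G) F #[x] = \sum_(j <- divisors #|G|) totient j * F j)%N.
Proof.
transitivity (\sum_(x in G) \sum_(j <- divisors #|G|) (#[x] == j) * F j)%N.
  apply: eq_bigr => x xG.
  rewrite (bigD1_seq #[x]) ?divisors_uniq //= ?eqxx ?mul1n; last first.
    by rewrite -dvdn_divisors ?cardG_gt0 ?order_dvdG.
  by rewrite big1_seq ?addn0 // => j /andP[nj _]; rewrite eq_sym (negPf nj).
rewrite exchange_big /=; apply: eq_big_seq => j; rewrite -dvdn_divisors ?cardG_gt0 // => jG.
rewrite -(card_order_eq jG) -big_distrl /=; congr (_ * _)%N.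
rewrite -sum1_card big_mkcond [RHS]big_mkcond /=; apply: eq_bigr => x _; rewrite !inE; by case: (x \in G); case: (#[x] == j).
Qed.
End Cyc.

Section Count.
Variable n : nat.
Local Notation p := n.+2.
Hypothesis hp : prime p.
Local Notation G := [set: {unit 'I_p}].
Local Notation toU := (FinRing.unit_action 'I_p).
Local Notation toS := (set_action toU).

Definition Aset e := [set S : {set 'I_p} | (#|S| == e) && (0 \notin S)].

Lemma unitP (x : 'I_p) : (x \is a GRing.unit) = (x != 0).
Proof.
have p1 : (1 < p)%N by [].
have h := @unitZpE p x p1; rewrite natr_Zp in h. rewrite h prime_coprime // -val_eqE /=.
apply/idP/idP; apply: contra.
  by move/eqP=> ->; rewrite dvdn0.
by move/dvdnP => [k hk]; have := ltn_ord x; rewrite hk; case: k {hk} => // k; rewrite mulSn; lia.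
Qed.

Lemma mulu_eq0 (x : 'I_p) (u : {unit 'I_p}) : (x * val u == 0) = (x == 0).
Proof.
apply/idP/idP => [/eqP h|/eqP ->]; last by rewrite mul0r.
by apply/eqP; apply: (mulIr (valP u)); rewrite h mul0r.
Qed.

Lemma acts_A e : [acts G, on Aset e | toS].
Proof.
apply/subsetP => u _; rewrite !inE /=.
apply/subsetP => S; rewrite !inE /= => /andP[cS zS].
rewrite card_setact cS /=; apply/imsetP => [[x xS /eqP]].
by rewrite eq_sym /= mulu_eq0 => /eqP x0; move: zS; rewrite -x0 xS.
Qed.


Local Open Scope group_scope.
Lemma fixA (u : {unit 'I_p}) e :
  #|'Fix_(Aset e | toS)[u]| = if (#[u] %| e)%N then 'C(p.-1 %/ #[u], e %/ #[u]) else 0%N.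
Proof.
set H := <[u]>; set X := [set~ (0 : 'I_p)]; set o := #[u].
have o0 : (0 < o)%N := order_gt0 u.
have actsX : [acts H, on X | toU].
  apply/subsetP => h _; rewrite !inE /=; apply/subsetP => x; rewrite !inE /=.
  by rewrite FinRing.unit_actE mulu_eq0.
set P := orbit toU H @: X.
have partP : partition P X := orbit_partition actsX.
have cardB : forall B, B \in P -> #|B| = o.
  move=> B /imsetP[x xX ->]; rewrite card_orbit.
  suff -> : 'C_H[x | toU] = 1%g by rewrite indexg1.
  apply/trivgP/subsetP => h /setIP[_ /astab1P hx]; rewrite inE.
  have ux : x \is a GRing.unit by rewrite unitP; move: xX; rewrite !inE.
  apply/eqP; apply: val_inj; apply: (mulrI ux); rewrite mulr1.
  by move: hx.
have tP : trivIset P by case/and3P: partP.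
have P0 : set0 \notin P by case/and3P: partP.
have coverP : cover P = X by case/and3P: partP => /eqP.
have cardP : (#|P| * o)%N = p.-1.
  have := card_partition partP; rewrite cardsC1 card_ord => ->.
  by rewrite (eq_bigr (fun _ => o)) ?sum_nat_const.
have cardQ (Q : {set {set 'I_p}}) : Q \subset P -> #|cover Q| = (#|Q| * o)%N.
  move=> QP; have : partition Q (cover Q).
    by rewrite /partition eqxx (trivIsetS QP tP) /=; apply: contra P0; apply: (subsetP QP).
  move/card_partition => ->; rewrite (eq_bigr (fun _ => o)) ?sum_nat_const // => B BQ.
  by apply: cardB; apply: (subsetP QP).
have injc : {in [set Q : {set {set 'I_p}} | Q \subset P] &, injective cover}.
  move=> Q1 Q2; rewrite !inE => Q1P Q2P E.
  suff key (Q : {set {set 'I_p}}) : Q \subset P -> Q = [set B in P | B \subset cover Q].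
    by rewrite (key _ Q1P) (key _ Q2P) E.
  move=> QP; apply/setP => B; rewrite inE; apply/idP/andP => [BQ|[BP Bs]].
    by split; [exact: (subsetP QP) | exact: bigcup_sup].
  have /set0Pn [x xB] : B != set0 by apply: contraNneq P0 => <-.
  have /bigcupP [B' B'Q xB'] := subsetP Bs x xB.
  have B'P := subsetP QP _ B'Q.
  by rewrite -(def_pblock tP BP xB) (def_pblock tP B'P xB').
have fixE : 'Fix_(Aset e | toS)[u] = cover @: [set Q : {set {set 'I_p}} | Q \subset P & (#|Q| * o == e)%N].
  apply/setP => S; rewrite inE; apply/idP/imsetP.
    case/andP => SA /afix1P fS.
    have actsS : [acts H, on S | toU].
      rewrite cycle_subG !inE /=; apply/subsetP => x xS; rewrite inE -fS; exact: mem_setact.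
    have partS := orbit_partition actsS.
    move: SA; rewrite inE => /andP[/eqP cS zS].
    have QP : orbit toU H @: S \subset P.
      apply: imsetS; apply/subsetP => x xS; rewrite !inE.
      by apply: contraNneq zS => <-.
    exists (orbit toU H @: S); last by rewrite (cover_partition partS).
    by rewrite inE QP -cardQ // (cover_partition partS) cS /=.
  case=> Q; rewrite inE => /andP[QP cQ] ->.
  rewrite inE; apply/andP; split.
    rewrite cardQ // cQ /=; apply/negP => /bigcupP[B BQ zB].
    have : 0 \in cover P by apply/bigcupP; exists B => //; exact: (subsetP QP).
    by rewrite coverP !inE eqxx.
  apply/afix1P; apply: astabs_setact; rewrite !inE /=.
  apply/subsetP => x /bigcupP[B BQ xB]; rewrite inE /=; apply/bigcupP; exists B => //.
  have /imsetP [y yX BE] := subsetP QP _ BQ.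
  move: xB; rewrite BE => /orbitP [h hH <-].
  by rewrite -actM /= mem_orbit // groupM // cycle_id.
rewrite fixE card_in_imset; last first.
  by move=> Q1 Q2; rewrite !inE => /andP[? _] /andP[? _]; apply: injc; rewrite inE.
case: ifP => oe.
  have cP : #|P| = (p.-1 %/ o)%N by rewrite -cardP mulnK.
  rewrite -cP -cards_draws; apply: eq_card => Q; rewrite !inE.
  by rewrite -{1}(divnK oe) eqn_pmul2r.
apply: eq_card0 => Q; rewrite !inE; apply/negP => /andP[_ /eqP ce].
by move: oe; rewrite -ce dvdn_mull.
Qed.


Definition Bset e := [set S : {set 'I_p} | (#|S| == e) && (0 \in S)].

Lemma toS0 (S : {set 'I_p}) u : toS (0 |: S) u = 0 |: toS S u.
Proof. by rewrite /= /setact imsetU1 /= FinRing.unit_actE mul0r. Qed.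

Lemma toS_notin0 (S : {set 'I_p}) u : 0 \notin S -> 0 \notin toS S u.
Proof.
move=> zS; apply/imsetP => [[x xS /eqP]].
by rewrite eq_sym /= FinRing.unit_actE mulu_eq0 => /eqP x0; move: zS; rewrite -x0 xS.
Qed.

Lemma acts_B e : [acts G, on Bset e | toS].
Proof.
apply/subsetP => u _; rewrite !inE /=.
apply/subsetP => S; rewrite !inE /= => /andP[cS zS].
rewrite card_setact cS /= -(setD1K zS) toS0; exact: setU11.
Qed.

Lemma fixB u e : #|'Fix_(Bset e.+1 | toS)[u]| = #|'Fix_(Aset e | toS)[u]|.
Proof.
have -> : 'Fix_(Bset e.+1 | toS)[u] = (fun S => 0 |: S) @: 'Fix_(Aset e | toS)[u].
  apply/setP => S; apply/idP/imsetP.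
    case/setIP => + /afix1P fS; rewrite !inE => /andP[cS zS].
    have zS' : 0 \notin S :\ 0 by rewrite setD11.
    exists (S :\ 0); last by rewrite setD1K.
    apply/setIP; split.
      rewrite in_set zS' andbT.
      by move: cS; rewrite (cardsD1 0) zS add1n eqSS.
    apply/afix1P.
    have fS' : toS (0 |: (S :\ 0)) u = 0 |: (S :\ 0) by rewrite setD1K.
    rewrite toS0 in fS'.
    by rewrite -(setU1K (toS_notin0 u zS')) fS' setU1K.
  case=> S' /setIP[SA /afix1P fS] ->; move: SA; rewrite in_set => /andP[cS zS].
  apply/setIP; split; first by rewrite in_set in_setU1 eqxx andbT cardsU1 zS (eqP cS).
  apply/afix1P.
  by rewrite toS0 fS.
apply: card_in_imset => S1 S2 /setIP[+ _] /setIP[+ _]; rewrite !in_set => /andP[_ z1] /andP[_ z2] E.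
by rewrite -(setU1K z1) E setU1K.
Qed.

Lemma cardG : #|G| = p.-1.
Proof. by have := card_units_Zp (isT : (0 < p)%N); rewrite totient_prime. Qed.

Lemma cycG : cyclic G.
Proof. exact: (units_Zp_cyclic hp). Qed.

Local Close Scope group_scope.
Lemma sum_div_filter (N e : nat) (F : nat -> nat) : (0 < N)%N ->
  (\sum_(j <- divisors N) totient j * (if (j %| e)%N then F j else 0%N) =
   \sum_(j <- divisors (gcdn N e)) F j * totient j)%N.
Proof.
move=> N0.
rewrite (eq_bigr (fun j => if (j %| e)%N then totient j * F j else 0%N)); last first.
  by move=> j _; case: ifP; rewrite ?muln0.
rewrite -big_mkcond /= -big_filter.
have g0 : (0 < gcdn N e)%N by rewrite gcdn_gt0 N0.
rewrite (perm_big (divisors (gcdn N e))) /=; last first.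
  apply: uniq_perm; rewrite ?filter_uniq ?divisors_uniq // => j.
  by rewrite mem_filter -!dvdn_divisors // dvdn_gcd andbC.
by apply: eq_bigr => j _; rewrite mulnC.
Qed.

Lemma countA e : (#|orbit toS G @: Aset e| * p.-1 =
  \sum_(j <- divisors (gcdn p.-1 e)) 'C(p.-1 %/ j, e %/ j) * totient j)%N.
Proof.
rewrite -{1}cardG -Frobenius_Cauchy ?acts_A //.
rewrite (eq_bigr (fun u => (fun j => if (j %| e)%N then 'C(p.-1 %/ j, e %/ j) else 0%N) #[u]%g)); last first.
  by move=> u _; rewrite fixA.
by rewrite (sum_order cycG (fun j => if (j %| e)%N then 'C(p.-1 %/ j, e %/ j) else 0%N)) cardG sum_div_filter.
Qed.

Lemma countB e : (#|orbit toS G @: Bset e.+1| * p.-1 =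
  \sum_(j <- divisors (gcdn p.-1 e)) 'C(p.-1 %/ j, e %/ j) * totient j)%N.
Proof.
rewrite -{1}cardG -Frobenius_Cauchy ?acts_B //.
rewrite (eq_bigr (fun u => (fun j => if (j %| e)%N then 'C(p.-1 %/ j, e %/ j) else 0%N) #[u]%g)); last first.
  by move=> u _; rewrite fixB fixA.
by rewrite (sum_order cycG (fun j => if (j %| e)%N then 'C(p.-1 %/ j, e %/ j) else 0%N)) cardG sum_div_filter.
Qed.

Local Open Scope ring_scope.
End Count.

Section Main.
Variable n : nat.
Local Notation p := n.+2.
Hypothesis hp : prime p.
Local Notation G := [set: {unit 'I_p}].
Local Notation toU := (FinRing.unit_action 'I_p).
Local Notation toS := (set_action toU).

Lemma frame_equivE (J K : {set 'I_p}) d : #|J| = d -> #|K| = d ->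
  frame_equiv d J K = (J \in orbit toS G K).
Proof.
move=> hJ hK; rewrite /frame_equiv /asbool; case: excluded_middle_informative => [h|h].
  have [c [pc E]] := gram hp hJ hK h.
  have JE := galois2 hp (etrans hJ (esym hK)) E.
  have cu : (inZp c : 'I_p) \is a GRing.unit.
    by rewrite unitP // -val_eqE /=; apply: contraNneq pc => /eqP; rewrite -/(dvdn p c).
  apply/esym/imsetP; exists (FinRing.unit 'I_p cu); first by rewrite inE.
  by rewrite JE /= /setact; apply: eq_imset => y /=; rewrite FinRing.unit_actE mulrC.
apply/esym/negP => /imsetP [u _ JE]; apply: h.
apply: (conv hp (valP u) hK); rewrite JE /= /setact; apply: eq_imset => y /=.
by rewrite FinRing.unit_actE mulrC.
Qed.

Lemma num_classesE (S : {set {set 'I_p}}) d :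
  [acts G, on S | toS] -> (forall J, J \in S -> #|J| = d) ->
  num_classes d S = #|orbit toS G @: S|.
Proof.
move=> aS cS; rewrite /num_classes.
suff -> : [set [set K in S | frame_equiv d J K] | J in S] = orbit toS G @: S by [].
apply: eq_in_imset => J JS.
apply/setP => K; rewrite inE; case: (boolP (K \in S)) => KS /=.
  by rewrite frame_equivE ?cS // orbit_sym.
apply/esym/negP => KO; move/negP: KS; apply.
have := acts_sub_orbit J aS; rewrite JS => /subsetP; apply; exact: KO.
Qed.

Lemma unlE d : unlifted_sets p d = Aset n d.
Proof.
apply/setP => S; rewrite !inE; congr (_ && _).
apply/forallP/idP => [h|h i].
  by apply/negP => zS; have := h 0; rewrite zS.
apply/implyP => iS; apply: contraNneq h => i0.
by have <- : i = 0 by apply: val_inj.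
Qed.

Lemma lifE d : lifted_sets p d = Bset n d.
Proof.
apply/setP => S; rewrite !inE; congr (_ && _).
apply/existsP/idP => [[i /andP[iS /eqP i0]]|h].
  by have <- : i = 0 by apply: val_inj.
by exists 0; rewrite h.
Qed.

Lemma final_rat (h N : nat) (s : nat) : (0 < N)%N -> (h * N = s)%N ->
  (h%:R : rat) = (N%:R)^-1 * s%:R.
Proof.
move=> N0 <-; rewrite natrM [(h%:R : rat) * _]mulrC mulKf //.
by rewrite pnatr_eq0 -lt0n.
Qed.

End Main.

Theorem theorem7p2 (p d : nat) (hp : prime p) (hd : (1 < d)%N) :
  (h_unlifted p d)%:R = hformula p d :> rat /\
  (h_lifted p d)%:R = hformula p d.-1 :> rat.
Proof.
case: p hp => [|[|n]] hp //.
have N0 : (0 < n.+2.-1)%N by [].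
rewrite /h_unlifted /h_lifted /hformula -!natr_sum.
split.
  rewrite unlE (num_classesE hp); last by move=> J; rewrite inE => /andP[/eqP].
    by apply: final_rat => //; apply: countA.
  exact: acts_A.
case: d hd => [|d] // hd /=.
rewrite lifE (num_classesE hp); last by move=> J; rewrite inE => /andP[/eqP].
  by apply: final_rat => //; apply: countB.
exact: acts_B.
Qed.
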